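(* Let $1\le s\le d/2$ and $n\ge d+1$, and let $\mathcal F\subseteq\binom{[n]}{d+1}$ be an $s$-witness family, where for each $F\in\mathcal F$ a witness $B_F\subseteq F$ with $|B_F|=s$ (so that $F\cap F'\ne B_F$ for all $F'\in\mathcal F$) has been fixed. Let $\mathcal B=\{B\in\binom{[n]}{s}: \exists F\in\mathcal F \text{ with } B_F=B\}$. Then there is a constant $C_d$ depending only on $d$ such that for every $B\in\mathcal B$ there exists a family $\mathcal A_B$ of subsets of $[n]\setminus B$, each of size at most $d+1-s$, satisfying: (1) $\mathcal A_B$ is intersecting, i.e. $A\cap A'\neq\varnothing$ for all $A,A'\in\mathcal A_B$; (2) for every $F\in\mathcal F$ with $B_F=B$, there exists $A\in\mathcal A_B$ with $A\subseteq F$; (3) for every $F\in\mathcal F$ with $B\subseteq F$ (possibly $B_F\ne B$), we have $A\cap F\neq\varnothing$ for all $A\in\mathcal A_B$; (4) $|\mathcal A_B|\le C_d$.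
   Context: $[n]=\{1,\dots,n\}$ and $\binom{[n]}{k}$ denotes the family of all $k$-element subsets of $[n]$. For $n\ge d+1$ and $0\le s\le d$, a family $\mathcal F\subseteq\binom{[n]}{d+1}$ is an $s$-witness family if for every $F\in\mathcal F$ there exists $B_F\subseteq F$ with $|B_F|=s$ such that $F\cap F'\neq B_F$ for every $F'\in\mathcal F$; such $B_F$ is called a witness of $F$. *)

(* Defs.v *)
From mathcomp Require Import all_boot.
Set Implicit Arguments. Unset Strict Implicit. Unset Printing Implicit Defensive.

(* [n] is modelled by 'I_n (elements 0..n-1); subsets of [n] are {set 'I_n}. *)

Definition witness_assignment (n d s : nat) (Fam : {set {set 'I_n}})
  (Bf : {set 'I_n} -> {set 'I_n}) : Prop :=
  forall F, F \in Fam ->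
    [/\ Bf F \subset F, #|Bf F| = s &
        forall F', F' \in Fam -> F :&: F' != Bf F].

Definition uniform_family (n k : nat) (Fam : {set {set 'I_n}}) : Prop :=
  forall F, F \in Fam -> #|F| = k.

Definition s_witness_family (n d s : nat) (Fam : {set {set 'I_n}}) : Prop :=
  uniform_family (d.+1) Fam /\
  exists Bf, witness_assignment d s Fam Bf.

(* Main.v *)
Require Import Defs.
From mathcomp Require Import all_boot.
Set Implicit Arguments. Unset Strict Implicit. Unset Printing Implicit Defensive.

Definition covers n (E : {set {set 'I_n}}) (S : {set 'I_n}) : bool :=
  [forall e in E, S :&: e != set0].

Definition step n d (E : {set {set 'I_n}}) (S : {set 'I_n}) (c : 'I_d.+1) :=
  if [pick e in E | S :&: e == set0] is Some e
  then S :|: [set x in e | index x (enum e) == c] else S.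

Definition decode n d (E : {set {set 'I_n}}) (c : seq 'I_d.+1) :=
  foldl (@step n d E) set0 c.

Lemma index_eq_in n (e : {set 'I_n}) x y :
  x \in e -> y \in e -> index x (enum e) = index y (enum e) -> x = y.
Proof.
move=> xe ye Hi.
have xs : x \in enum e by rewrite mem_enum.
have ys : y \in enum e by rewrite mem_enum.
by rewrite -(nth_index x xs) Hi (nth_index x ys).
Qed.

Lemma decode_ex n d (E : {set {set 'I_n}}) (T : {set 'I_n}) :
  (forall e, e \in E -> #|e| <= d.+1) -> covers E T ->
  forall m, exists c : seq 'I_d.+1, size c = m /\
    (decode E c \subset T /\ (covers E (decode E c) \/ m <= #|decode E c|)).
Proof.
move=> HE HT; elim=> [|m [c [Hc [HsT Hor]]]].
  by exists [::]; split=> //; split; [apply: sub0set| right].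
set S := decode E c in HsT Hor *.
case Hp: [pick e in E | S :&: e == set0] => [e|].
  have Hp' := Hp; move: Hp'; case: pickP => // e0 /andP [eE /eqP Se0] [Ee0]; subst e0.
  have: T :&: e != set0 by move/forallP: HT => /(_ e); rewrite eE.
  case/set0Pn=> y /setIP [yT ye].
  have Hi : index y (enum e) < d.+1.
    apply: leq_trans (HE _ eE); rewrite cardE index_mem mem_enum //.
  exists (rcons c (Ordinal Hi)); split; first by rewrite size_rcons Hc.
  rewrite /decode foldl_rcons -/(decode E c) -/S /step Hp.
  have Hset : [set x in e | index x (enum e) == Ordinal Hi] = [set y].
    apply/setP=> x; rewrite !inE /=; apply/andP/eqP=> [[xe /eqP]|->].
      by apply: index_eq_in.
    by rewrite ye eqxx.
  rewrite Hset; split.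
    by rewrite subUset HsT sub1set.
  right; rewrite setUC cardsU1.
  have -> : y \notin S.
    apply/negP=> yS; have: y \in S :&: e by rewrite inE yS ye.
    by rewrite Se0 inE.
  rewrite add1n ltnS; case: Hor => // Hc'.
  by move/forallP: Hc' => /(_ e); rewrite eE Se0 eqxx.
exists (rcons c ord0); split; first by rewrite size_rcons Hc.
rewrite /decode foldl_rcons -/(decode E c) -/S /step Hp; split=> //.
left; apply/forallP=> e; apply/implyP=> eE.
have Hp' := Hp; move: Hp'; case: pickP => // /(_ e); rewrite eE /= => /negbT //.
Qed.

Lemma count_min n d (E K : {set {set 'I_n}}) :
  (forall e, e \in E -> #|e| <= d.+1) ->
  (forall T, T \in K -> [/\ #|T| <= d, covers E T &
      forall S : {set 'I_n}, S \proper T -> ~~ covers E S]) ->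
  #|K| <= d.+1 ^ d.
Proof.
move=> HE HK.
have sub : K \subset [set decode E (tval t) | t : d.-tuple 'I_d.+1].
  apply/subsetP=> T TK; have [Hsz Hcov Hmin] := HK T TK.
  have [c [Hc [HsT Hor]]] := decode_ex HE Hcov d.
  have Hc' : size c == d by rewrite Hc.
  apply/imsetP; exists (Tuple Hc') => //=.
  have Hcv : covers E (decode E c).
    case: Hor => // Hle.
    suff -> : decode E c = T by [].
    by apply/eqP; rewrite eqEcard HsT (leq_trans Hsz Hle).
  apply/eqP; rewrite eq_sym eqEproper HsT /=.
  by apply/negP=> /Hmin; rewrite Hcv.
apply: leq_trans (subset_leq_card sub) _.
apply: leq_trans (leq_imset_card _ _) _.
by rewrite card_tuple card_ord.
Qed.

Definition goodK n d s (Fam : {set {set 'I_n}}) (Bf : {set 'I_n} -> {set 'I_n})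
  (B : {set 'I_n}) (K : {set {set 'I_n}}) : Prop :=
  [/\ forall A, A \in K -> A \subset ~: B /\ #|A| <= d.+1 - s,
      forall A A', A \in K -> A' \in K -> A :&: A' != set0,
      forall F, F \in Fam -> Bf F = B -> exists2 A, A \in K & A \subset F
    & forall F, F \in Fam -> B \subset F ->
        forall A, A \in K -> A :&: F != set0].

Definition Gof n (Fam : {set {set 'I_n}}) (B : {set 'I_n}) :=
  [set F in Fam | B \subset F].

Lemma shrink n d s Fam Bf B (K : {set {set 'I_n}}) A (S : {set 'I_n}) :
  goodK d s Fam Bf B K -> A \in K -> S \proper A -> covers (K :|: Gof Fam B) S ->
  goodK d s Fam Bf B (S |: (K :\ A)) /\
  \sum_(X in S |: (K :\ A)) #|X| < \sum_(X in K) #|X|.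
Proof.
move=> [Ha Hb Hc Hd] AK SA Hcov.
have SsubA : S \subset A by case/andP: SA.
have covK : forall X, X \in K -> S :&: X != set0.
  by move=> X XK; move/forallP: Hcov => /(_ X); rewrite inE XK.
have covG : forall F, F \in Fam -> B \subset F -> S :&: F != set0.
  by move=> F FF BF; move/forallP: Hcov => /(_ F); rewrite !inE FF BF orbT.
split.
  split.
  - move=> X; rewrite !inE => /orP [/eqP ->| /andP [_ XK]]; last exact: Ha.
    have [h1 h2] := Ha A AK; split; first exact: subset_trans SsubA h1.
    exact: leq_trans (subset_leq_card SsubA) h2.
  - move=> X Y; rewrite !inE => /orP [/eqP ->| /andP [_ XK]] /orP [/eqP ->| /andP [_ YK]].
    + by rewrite setIid; have := covK A AK; apply: contra => /eqP ->; rewrite set0I.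
    + exact: covK.
    + by rewrite setIC; apply: covK.
    + exact: Hb.
  - move=> F FF BF; have [X XK XF] := Hc F FF BF.
    case: (X =P A) => [EX|NX].
      by exists S; rewrite ?setU11 //; apply: subset_trans SsubA _; rewrite -EX.
    by exists X => //; rewrite !inE XK andbT; apply/orP; right; apply/eqP.
  - move=> F FF BF X; rewrite !inE => /orP [/eqP ->| /andP [_ XK]]; last exact: Hd.
    exact: covG.
rewrite (big_setD1 A AK) /=.
have lt : #|S| < #|A| by apply: proper_card.
case: (boolP (S \in K :\ A)) => SK.
  by rewrite (setUidPr _) ?sub1set // -add1n leq_add2r; apply: leq_trans _ lt.
rewrite big_setU1 //= ltn_add2r //.
Qed.

Lemma reduce n d s Fam Bf B : forall m (K : {set {set 'I_n}}),
  goodK d s Fam Bf B K -> \sum_(X in K) #|X| <= m ->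
  exists K', goodK d s Fam Bf B K' /\
    forall A, A \in K' -> forall S : {set 'I_n}, S \proper A ->
      ~~ covers (K' :|: Gof Fam B) S.
Proof.
elim=> [|m IH] K HK Hm;
  (case: (boolP [exists A in K, exists S : {set 'I_n},
                   (S \proper A) && covers (K :|: Gof Fam B) S]) => Hex;
  last first;
  [ exists K; split=> // A AK S SA; apply/negP=> Scov; move/negP: Hex; apply;
    apply/existsP; exists A; rewrite AK; apply/existsP; exists S; rewrite SA Scov //
  | case/existsP: Hex => A /andP [AK /existsP [S /andP [SA Scov]]] ]).
  by have [_ Hlt] := shrink HK AK SA Scov; move: (leq_trans Hlt Hm).
have [HK2 Hlt] := shrink HK AK SA Scov.
apply: IH HK2 _; rewrite -ltnS; exact: leq_trans Hlt Hm.
Qed.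

Lemma key n d s (Fam : {set {set 'I_n}}) Bf B F1 F :
  witness_assignment d s Fam Bf -> F1 \in Fam -> Bf F1 = B ->
  F \in Fam -> B \subset F -> (F1 :\: B) :&: F != set0.
Proof.
move=> HW F1F HB FF BF; have [BF1 _ Hw] := HW F1 F1F.
have := Hw F FF; rewrite HB; apply: contra => /eqP H0.
have BF1' : B \subset F1 by rewrite -HB.
rewrite eqEsubset subsetI BF1' BF !andbT.
apply/subsetP=> x /setIP [xF1 xF]; apply/negPn/negP=> xB.
have : x \in (F1 :\: B) :&: F by rewrite !inE xB xF1 xF.
by rewrite H0 inE.
Qed.

Theorem lemma2p2 (d : nat) :
  exists C : nat,
  forall (s n : nat) (Fam : {set {set 'I_n}}) (Bf : {set 'I_n} -> {set 'I_n}),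
    1 <= s -> s.*2 <= d -> d.+1 <= n ->
    uniform_family d.+1 Fam ->
    witness_assignment d s Fam Bf ->
    forall B : {set 'I_n},
      (exists2 F, F \in Fam & Bf F = B) ->
      exists AB : {set {set 'I_n}},
        [/\ forall A, A \in AB -> A \subset ~: B /\ #|A| <= d.+1 - s,
            forall A A', A \in AB -> A' \in AB -> A :&: A' != set0,
            forall F, F \in Fam -> Bf F = B -> exists2 A, A \in AB & A \subset F,
            forall F, F \in Fam -> B \subset F ->
              forall A, A \in AB -> A :&: F != set0
          & #|AB| <= C].
Proof.
exists (d.+1 ^ d) => s n Fam Bf s1 s2 dn HU HW B _.
pose K0 := [set F :\: B | F in [set F in Fam | Bf F == B]].
have HK0 : goodK d s Fam Bf B K0.
  split.
  - move=> A /imsetP [F]; rewrite inE => /andP [FF /eqP HB] ->.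
    split; first by apply/subsetP=> x; rewrite !inE => /andP [].
    have [BF cB _] := HW F FF.
    rewrite cardsD HU // (setIidPr _) -HB ?cB //.
  - move=> A A' /imsetP [F]; rewrite inE => /andP [FF /eqP HB] ->.
    move=> /imsetP [F']; rewrite inE => /andP [F'F /eqP HB'] ->.
    have [BF' _ _] := HW F' F'F.
    have BF'' : B \subset F' by rewrite -HB'.
    have := key HW FF HB F'F BF''.
    case/set0Pn=> x; rewrite !inE => /andP [/andP [xB xF] xF'].
    by apply/set0Pn; exists x; rewrite !inE xB xF xF'.
  - move=> F FF HB; exists (F :\: B); last by apply: subsetDl.
    by apply/imsetP; exists F => //; rewrite inE FF HB eqxx.
  - move=> F FF BF A /imsetP [F1]; rewrite inE => /andP [F1F /eqP HB] ->.
    exact: key HW F1F HB FF BF.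
have [K [[Ha Hb Hc Hd] Hmin]] := reduce HK0 (leqnn _).
exists K; split=> //.
apply: (@count_min n d (K :|: Gof Fam B)).
  move=> e; rewrite !inE => /orP [eK | /andP [eF _]].
    have [_ h] := Ha e eK; apply: leq_trans h _; exact: leq_subr.
  by rewrite HU.
move=> T TK; split.
- have [_ h] := Ha T TK; apply: leq_trans h _.
  by case: s s1 {s2 HW Ha Hb Hc Hd Hmin HK0 K0} => // s _; rewrite subSS leq_subr.
- apply/forallP=> e; apply/implyP; rewrite !inE => /orP [eK | /andP [eF Be]].
    exact: Hb.
  exact: Hd.
- exact: Hmin.
Qed.
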